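(* Let $q$ be a power of an odd prime and let $n$ be a positive integer with $\gcd\big(n,\frac{q-1}{2}\big)=1$. Then the number of elements $a\in\mathbb{F}_q$ for which the binomial $x^n\big(x^{\frac{q-1}{2}}+a\big)$ is a permutation polynomial of $\mathbb{F}_q$ equals $$\frac{q-2+(-1)^n}{2}.$$
   Context: A polynomial $f\in\mathbb{F}_q[x]$ is a permutation polynomial of $\mathbb{F}_q$ if the map $c\mapsto f(c)$ is a bijection of $\mathbb{F}_q$. *)

(* Defs.v *)
From HB Require Import structures.
From mathcomp Require Import all_boot all_order all_algebra all_field.
Set Implicit Arguments. Unset Strict Implicit. Unset Printing Implicit Defensive.
Import GRing.Theory.
Local Open Scope ring_scope.

(* A polynomial f over a finite field F is a permutation polynomial of F
   if c |-> f(c) is a bijection of F, i.e. has a two-sided inverse map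
   (boolean form, since F is finite, so it can be counted). *)
Definition perm_polyb (F : finFieldType) (f : {poly F}) : bool :=
  [exists g : {ffun F -> F}, [forall c, (g f.[c] == c) && (f.[g c] == c)]].

(* Main.v *)
Require Import Defs.
From HB Require Import structures.
From mathcomp Require Import all_boot all_order all_algebra all_field.
From mathcomp Require Import ring zify.
Import GRing.Theory.
Local Open Scope ring_scope.

Set Implicit Arguments. Unset Strict Implicit.
Import GRing.Theory.
Local Open Scope ring_scope.

Lemma two_nz (F : finFieldType) : odd #|F| -> (2:F) != 0.
Proof.
move=> hodd; apply/negP => /eqP h2.
have pc : (2%N \in [pchar F]) by rewrite inE /= h2 eqxx.
have := card_pprimeChar pc.
move: (finNzRing_gt1 F) hodd.
change #|pPrimeCharType pc| with #|F|.
move=> h1 ho he; move: ho; rewrite he oddX /=.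
case: (logn 2 #|F|) he => [|k] //= he.
by move: h1; rewrite he.
Qed.

Lemma one_neq_m1 (F : finFieldType) : odd #|F| -> (1:F) != -1.
Proof.
move=> ho; apply/negP=> /eqP h; move: (two_nz ho).
rewrite (_ : (2:F) = 1 - -1); last by ring.
by rewrite -h subrr eqxx.
Qed.

Lemma sum_ind (T : finType) (P : pred T) :
  (\sum_(x : T) (P x : nat) = #|[set x | P x]|)%N.
Proof. rewrite -sum1dep_card [RHS]big_mkcond /=; apply: eq_bigr => x _; by case: (P x). Qed.

Lemma roots_le (F : finFieldType) (m : nat) (c : F) : (0 < m)%N ->
  (#|[set x : F | x ^+ m == c]| <= m)%N.
Proof.
move=> hm.
have hp : ('X^m - c%:P : {poly F}) != 0.
  by rewrite -size_poly_eq0 size_XnsubC.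
have := max_poly_roots hp (rs := enum [set x : F | x ^+ m == c]).
rewrite size_XnsubC // -cardE ltnS; apply; last exact: enum_uniq.
apply/allP => x; rewrite mem_enum inE => /eqP hx.
by rewrite rootE !hornerE hx subrr.
Qed.

Lemma oddq (F : finFieldType) m : (#|F| = (2 * m).+1)%N -> odd #|F|.
Proof. by move=> hq; rewrite hq /= oddM. Qed.

Lemma m_pos (F : finFieldType) m : (#|F| = (2 * m).+1)%N -> (0 < m)%N.
Proof. move=> hq; have := finNzRing_gt1 F; rewrite hq; case: m {hq} => //. Qed.

Lemma pow2m (F : finFieldType) m (x : F) : (#|F| = (2 * m).+1)%N -> x != 0 -> x ^+ (2 * m)%N = 1.
Proof.
move=> hq hx; have := expf_card x; rewrite hq exprS => h.
by apply: (mulfI hx); rewrite h mulr1.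
Qed.

Lemma pm (F : finFieldType) m (x : F) : (#|F| = (2 * m).+1)%N -> x != 0 ->
  (x ^+ m == 1) || (x ^+ m == -1).
Proof.
move=> hq hx; rewrite -sqrf_eq1 -exprM mulnC.
by rewrite (pow2m hq hx).
Qed.

Lemma cardRpm (F : finFieldType) m : (#|F| = (2 * m).+1)%N ->
  #|[set x : F | x ^+ m == 1]| = m /\ #|[set x : F | x ^+ m == -1]| = m.
Proof.
move=> hq.
have hm := m_pos hq.
have h1m := one_neq_m1 (oddq hq).
have e : forall x : F, ((x != 0) : nat) = ((x ^+ m == 1) : nat) + ((x ^+ m == -1) : nat).
  move=> x; have [->|hx] := eqVneq x 0.
    have hm0 : (m == 0%N) = false by case: m hm {hq} => //.
    rewrite expr0n hm0 /=. by rewrite eq_sym oner_eq0 eq_sym oppr_eq0 oner_eq0.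
  have := pm hq hx; case/orP => /eqP ->; rewrite eqxx.
    by rewrite (negbTE h1m).
  by rewrite eq_sym (negbTE h1m).
have : (\sum_(x : F) ((x != 0)%R : nat) = \sum_(x : F) ((x ^+ m == 1)%R : nat) + \sum_(x : F) ((x ^+ m == -1)%R : nat))%N.
  by rewrite -big_split /=; apply: eq_bigr => x _; rewrite e.
rewrite !sum_ind.
have -> : #|[set x : F | x != 0]| = (2 * m)%N.
  by rewrite (_ : [set x : F | x != 0] = [set~ 0]) ?cardsC1 ?hq //; apply/setP => x; rewrite !inE.
move=> hs.
have l1 := roots_le (1:F) hm. have l2 := roots_le (-1:F) hm.
move: hs l1 l2. set A := #|_|. set B := #|_|. clearbody A B. lia.
Qed.

Lemma fib_sq (F : finFieldType) (y0 : F) : odd #|F| -> y0 != 0 ->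
  [set y : F | y ^+ 2 == y0 ^+ 2] = [set y0; -y0] /\ #|[set y0; -y0]| = 2.
Proof.
move=> ho hy0; split.
  by apply/setP => y; rewrite !inE eqf_sqr.
rewrite cards2; suff -> : y0 != -y0 by []. apply/negP => /eqP h.
move: (two_nz ho); rewrite (_ : (2:F) = (y0 - - y0) / y0); last by field.
by rewrite -h subrr mul0r eqxx.
Qed.

Lemma euler (F : finFieldType) m (x : F) : (#|F| = (2 * m).+1)%N ->
  x ^+ m == 1 -> exists2 y, y != 0 & y ^+ 2 = x.
Proof.
move=> hq hx.
have ho := oddq hq.
pose S := [set y ^+ 2 | y in [set y : F | y != 0]].
have hp : (\sum_(y : F | (y != 0)%R) 1 = \sum_(z in S) \sum_(y : F | (y != 0)%R && (y ^+ 2 == z)%R) 1)%N.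
  by apply: (partition_big (fun y : F => y ^+ 2) (fun z => z \in S)) => y hy; apply: imset_f; rewrite inE.
have hS : (\sum_(z in S) \sum_(y : F | (y != 0)%R && (y ^+ 2 == z)%R) 1 = \sum_(z in S) 2)%N.
  apply: eq_bigr => z /imsetP [y0]; rewrite inE => hy0 ->.
  rewrite sum1dep_card.
  have [e1 e2] := fib_sq ho hy0.
  rewrite -[RHS]e2 -e1. apply: eq_card => y; rewrite !inE.
  by case: (eqVneq y 0) => [->|//]; rewrite expr0n /= eq_sym expf_eq0 (negbTE hy0) andbF.
rewrite hS sum_nat_const sum1dep_card in hp.
have hnz : #|[set y : F | y != 0]| = (2 * m)%N.
  by rewrite (_ : [set x : F | x != 0] = [set~ 0]) ?cardsC1 ?hq //; apply/setP => y; rewrite !inE.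
rewrite hnz in hp.
have hSm : #|S| = m by move: hp; clear; lia.
have sub : S \subset [set z : F | z ^+ m == 1].
  apply/subsetP => z /imsetP [y0]; rewrite inE => hy0 ->.
  by rewrite inE -exprM (pow2m hq hy0).
have [c1 _] := cardRpm hq.
have : S == [set z : F | z ^+ m == 1] by rewrite eqEcard sub c1 hSm leqnn.
move/eqP => eS.
have : x \in S by rewrite eS inE.
by case/imsetP => y; rewrite inE => hy ->; exists y.
Qed.

Lemma fib (F : finFieldType) m (x : F) : (#|F| = (2 * m).+1)%N ->
  #|[set y : F | y ^+ 2 == x]| = ((x == 0)%R + (x ^+ m == 1)%R * 2)%N.
Proof.
move=> hq; have hm := m_pos hq; have ho := oddq hq.
have [->|hx] := eqVneq x 0.
  have hm0 : (m == 0%N) = false by case: m hm {hq} => //.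
  rewrite expr0n hm0 /= eq_sym oner_eq0 /=.
  rewrite (_ : [set y : F | y ^+ 2 == 0] = [set 0]) ?cards1 //.
  by apply/setP => y; rewrite !inE expf_eq0.
rewrite /=.
case: (boolP (x ^+ m == 1)) => h /=.
  have [y0 hy0 <-] := euler hq h.
  have [e1 e2] := fib_sq ho hy0.
  by rewrite e1 e2.
apply/eqP; rewrite cards_eq0; apply/eqP/setP => y; rewrite !inE.
apply/negP => /eqP hy; move/negP: h; apply.
have hy0 : y != 0 by apply: contraNneq hx => hy0; rewrite -hy hy0 expr0n.
by rewrite -hy -exprM (pow2m hq hy0).
Qed.

Lemma cardT (F : finFieldType) m : (#|F| = (2 * m).+1)%N ->
  #|[set p : F * F | p.2 ^+ 2 == p.1 ^+ 2 - 1]| = (2 * m)%N.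
Proof.
move=> hq; have ho := oddq hq; have h2 := two_nz ho.
pose g := fun u : F => ((u + u^-1) / 2, (u - u^-1) / 2).
have key : forall u : F, (u + u^-1) / 2 + (u - u^-1) / 2 = u.
  move=> u; rewrite -mulrDl (_ : u + u^-1 + (u - u^-1) = u * 2); first by rewrite mulfK.
  ring.
have gi : injective g.
  move=> u v huv.
  have : (g u).1 + (g u).2 = (g v).1 + (g v).2 by rewrite huv.
  by rewrite /g /= !key.
have -> : [set p : F * F | p.2 ^+ 2 == p.1 ^+ 2 - 1] = g @: [set u : F | u != 0].
  apply/eqP; rewrite eqEsubset; apply/andP; split; apply/subsetP.
    move=> [a b]; rewrite inE /= => /eqP hab.
    have huw : (a + b) * (a - b) = 1.
      transitivity (a ^+ 2 - b ^+ 2); first by ring.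
      by rewrite hab; ring.
    have hu : a + b != 0 by apply: contra_eq_neq huw => ->; rewrite mul0r eq_sym oner_eq0.
    have hinv : (a + b)^-1 = a - b.
      by rewrite -[LHS]mulr1 -huw mulKf.
    apply/imsetP; exists (a + b); first by rewrite inE.
    rewrite /g hinv; congr pair; field; exact: h2.
  move=> p /imsetP [u]; rewrite inE => hu ->.
  rewrite inE /g /=; apply/eqP; field.
  by rewrite h2 hu.
by rewrite card_imset // (_ : [set x : F | x != 0] = [set~ 0]) ?cardsC1 ?hq //; apply/setP => y; rewrite !inE.
Qed.

Lemma countA (F : finFieldType) m : (#|F| = (2 * m).+1)%N ->
  #|[set a : F | (a ^+ 2 - 1) ^+ m == 1]| = (m - 1)%N /\
  #|[set a : F | (a ^+ 2 - 1) ^+ m == -1]| = m.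
Proof.
move=> hq; have hm := m_pos hq; have ho := oddq hq; have h1m := one_neq_m1 ho.
have hm0 : (m == 0%N) = false by case: m hm {hq} => //.
have c0 : #|[set a : F | a ^+ 2 == 1]| = 2.
  rewrite (_ : [set a : F | a ^+ 2 == 1] = [set 1; -1]) ?cards2 ?h1m //.
  by apply/setP => a; rewrite !inE sqrf_eq1.
have e1 : (\sum_(a : F) #|[set b : F | (b ^+ 2 == a ^+ 2 - 1)%R]| = (2 * m))%N.
  transitivity (\sum_(a : F) \sum_(b : F) ((b ^+ 2 == a ^+ 2 - 1)%R : nat))%N.
    by apply: eq_bigr => a _; rewrite sum_ind.
  rewrite pair_bigA /= (sum_ind (fun p : F * F => (p.2 ^+ 2 == p.1 ^+ 2 - 1)%R)).
  exact: cardT.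
have e2 : forall a : F, #|[set b : F | (b ^+ 2 == a ^+ 2 - 1)%R]| =
    ((a ^+ 2 == 1)%R + ((a ^+ 2 - 1) ^+ m == 1)%R * 2)%N.
  by move=> a; rewrite (fib _ hq) subr_eq0.
have e3 : forall a : F, 1%N = ((a ^+ 2 == 1)%R + ((a ^+ 2 - 1) ^+ m == 1)%R + ((a ^+ 2 - 1) ^+ m == -1)%R)%N.
  move=> a; case: (eqVneq (a ^+ 2) 1) => [->|h].
    by rewrite subrr expr0n hm0 /= eq_sym oner_eq0 eq_sym oppr_eq0 oner_eq0.
  have hnz : a ^+ 2 - 1 != 0 by rewrite subr_eq0.
  case/orP: (pm hq hnz) => /eqP ->; rewrite eqxx ?(negbTE h1m) //.
  by rewrite eq_sym (negbTE h1m).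
have s2 : (\sum_(a : F) #|[set b : F | (b ^+ 2 == a ^+ 2 - 1)%R]| =
    \sum_(a : F) ((a ^+ 2 == 1)%R : nat) + (\sum_(a : F) (((a ^+ 2 - 1) ^+ m == 1)%R : nat)) * 2)%N.
  by rewrite big_distrl -big_split /=; apply: eq_bigr => a _; rewrite e2.
have s3 : (\sum_(a : F) 1 = \sum_(a : F) ((a ^+ 2 == 1)%R : nat) + \sum_(a : F) (((a ^+ 2 - 1) ^+ m == 1)%R : nat)
     + \sum_(a : F) (((a ^+ 2 - 1) ^+ m == -1)%R : nat))%N.
  by rewrite -!big_split /=; apply: eq_bigr => a _; rewrite -e3.
rewrite e1 !sum_ind c0 in s2.
rewrite sum1_card !sum_ind c0 hq in s3.
move: s2 s3; set A := #|_|; set B := #|_|; clearbody A B.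
move=> s2 s3; split; lia.
Qed.

Lemma powinj (F : fieldType) n m (c d : F) : (0 < n)%N -> coprime n m -> c != 0 ->
  c ^+ n = d ^+ n -> c ^+ m = d ^+ m -> c = d.
Proof.
move=> hn hco hc en em.
have [u _ hu] := Bezoutl m hn.
rewrite (eqP hco) in hu; case/dvdnP: hu => k hk.
have ec : c * (c ^+ m) ^+ u = (c ^+ n) ^+ k by rewrite -!exprM -exprS -add1n (mulnC m u) hk (mulnC k n).
have ed : d * (d ^+ m) ^+ u = (d ^+ n) ^+ k by rewrite -!exprM -exprS -add1n (mulnC m u) hk (mulnC k n).
have hX : (c ^+ m) ^+ u != 0 by rewrite !expf_neq0.
apply: (mulIf hX); rewrite ec en -ed em //.
Qed.

Lemma perm_polybP (F : finFieldType) (f : {poly F}) :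
  reflect (injective (fun c => f.[c])) (perm_polyb f).
Proof.
apply: (iffP existsP).
  move=> [g /forallP hg] x y /= e.
  by rewrite -(eqP (andP (hg x)).1) e (eqP (andP (hg y)).1).
move=> hi; have [g h1 h2] := injF_bij hi.
exists [ffun c => g c]; apply/forallP => c; rewrite !ffunE.
by rewrite h1 h2 !eqxx.
Qed.

Lemma charPP (F : finFieldType) m n (a : F) : (#|F| = (2 * m).+1)%N ->
  (0 < n)%N -> coprime n m ->
  injective (fun c : F => c ^+ n * (c ^+ m + a)) <-> (a ^+ 2 - 1) ^+ m = - (-1) ^+ n.
Proof.
move=> hq hn hco.
have hm := m_pos hq; have ho := oddq hq; have h1m := one_neq_m1 ho; have h2 := two_nz ho.
have hm0 : (m == 0%N) = false by case: m hm {hq hco} => //.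
set s := (-1) ^+ n : F.
have hs : s = 1 \/ s = -1 by rewrite /s -signr_odd; case: (odd n); [right|left].
have hs0 : s != 0 by rewrite /s signr_eq0.
have hss : s != - s.
  apply/negP => /eqP e; move: h2; rewrite (_ : (2:F) = (s - - s) / s); last by field.
  by rewrite -e subrr mul0r eqxx.
have fact2 : a ^+ 2 - 1 = (a + 1) * (a - 1) by ring.
have powh : forall c : F, (c ^+ n * (c ^+ m + a)) ^+ m = (c ^+ m) ^+ n * (c ^+ m + a) ^+ m.
  by move=> c; rewrite exprMn -!exprM mulnC.
have sq1 : forall x : F, x != 0 -> (x ^+ m) ^+ 2 = 1.
  by move=> x hx; rewrite -exprM mulnC pow2m.
split.
- move=> hi.
  have h00 : 0 ^+ n * (0 ^+ m + a) = 0 :> F by rewrite expr0n gtn_eqF // mul0r.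
  have ham1 : a + 1 != 0.
    apply/negP => /eqP e.
    have : (fun c : F => c ^+ n * (c ^+ m + a)) 1 = (fun c : F => c ^+ n * (c ^+ m + a)) 0.
      by rewrite /= h00 !expr1n addrC e mulr0.
    by move/hi/eqP; rewrite oner_eq0.
  have hap1 : a - 1 != 0.
    apply/negP => /eqP e.
    have [_ cm] := cardRpm hq.
    have : [set x : F | x ^+ m == -1] != set0 by rewrite -card_gt0 cm.
    case/set0Pn => c; rewrite inE => /eqP hc.
    have : (fun c : F => c ^+ n * (c ^+ m + a)) c = (fun c : F => c ^+ n * (c ^+ m + a)) 0.
      by rewrite /= h00 hc addrC e mulr0.
    move/hi => c0; move: hc; rewrite c0 expr0n hm0 => /eqP.
    by rewrite eq_sym oppr_eq0 oner_eq0.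
  have hnz : a ^+ 2 - 1 != 0 by rewrite fact2 mulf_neq0.
  case: (eqVneq ((a ^+ 2 - 1) ^+ m) (- s)) => // hne.
  have hv : (a ^+ 2 - 1) ^+ m = s.
    case/orP: (pm hq hnz) => /eqP hv; case: hs => hs'; rewrite hv hs' //; move: hne; rewrite hv hs' ?opprK ?eqxx //.
  pose K := (a + 1) ^+ m.
  have hK : K = s * (a - 1) ^+ m.
    by rewrite /K; apply: (mulIf (expf_neq0 m hap1)); rewrite -exprMn -fact2 hv -mulrA -expr2 sq1 // mulr1.
  have himg : forall c : F, c != 0 -> (c ^+ n * (c ^+ m + a)) ^+ m = K.
    move=> c hc; rewrite powh; case/orP: (pm hq hc) => /eqP ->.
      by rewrite expr1n mul1r addrC.
    by rewrite hK addrC.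
  have hsub : [set (c ^+ n * (c ^+ m + a)) | c in [set c : F | c != 0]] \subset [set y : F | y ^+ m == K].
    by apply/subsetP => y /imsetP [c]; rewrite inE => hc ->; rewrite inE himg.
  have := subset_leq_card hsub; rewrite card_in_imset; last by move=> x y _ _; apply: hi.
  rewrite (_ : [set x : F | x != 0] = [set~ 0]) ?cardsC1 ?hq; last by apply/setP => y; rewrite !inE.
  have := roots_le K hm; set A := #|_|; move=> h1 h3; exfalso; clearbody A; lia.
- move=> E.
  have hnz : a ^+ 2 - 1 != 0.
    by apply/negP => /eqP e; move: E; rewrite e expr0n hm0 => /eqP; rewrite eq_sym oppr_eq0 (negbTE hs0).
  have ham1 : a + 1 != 0 by move: hnz; rewrite fact2 mulf_eq0 negb_or => /andP [].
  have hap1 : a - 1 != 0 by move: hnz; rewrite fact2 mulf_eq0 negb_or => /andP [].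
  have hK : (a + 1) ^+ m != s * (a - 1) ^+ m.
    apply/negP => /eqP e.
    move: E; rewrite fact2 exprMn e -mulrA -expr2 (sq1 _ hap1) mulr1 => /eqP.
    by rewrite (negbTE hss).
  have hcm : forall c : F, c != 0 -> c ^+ m + a != 0.
    move=> c hc; case/orP: (pm hq hc) => /eqP ->; first by rewrite addrC.
    by rewrite addrC.
  have h0 : forall c : F, c != 0 -> c ^+ n * (c ^+ m + a) != 0.
    by move=> c hc; rewrite mulf_neq0 ?expf_neq0 ?hcm.
  have h00 : 0 ^+ n * (0 ^+ m + a) = 0 :> F by rewrite expr0n gtn_eqF // mul0r.
  move=> c d /= e.
  have [c0|hc] := eqVneq c 0.
    move: e; rewrite c0 h00; have [//|hd] := eqVneq d 0.
    by move=> e; move: (h0 d hd); rewrite -e eqxx.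
  have [d0|hd] := eqVneq d 0.
    by move: e; rewrite d0 h00 => e; move: (h0 c hc); rewrite e eqxx.
  have em : (c ^+ n * (c ^+ m + a)) ^+ m = (d ^+ n * (d ^+ m + a)) ^+ m by rewrite e.
  rewrite !powh in em.
  have same : c ^+ m = d ^+ m.
    case/orP: (pm hq hc) => /eqP ec; case/orP: (pm hq hd) => /eqP ed; rewrite ec ed //.
      move: em; rewrite ec ed expr1n mul1r addrC (addrC (-1)) => em.
      by move: hK; rewrite em eqxx.
    move: em; rewrite ec ed expr1n mul1r (addrC (-1)) (addrC 1) => em.
    by move: hK; rewrite -em /s eqxx.
  apply: (powinj hn hco hc) => //.
  by apply: (mulIf (hcm _ hc)); rewrite e same.
Qed.

Unset Implicit Arguments.
Set Strict Implicit.

(* q = #|F|; "q a power of an odd prime" <=> F finite field of odd order.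
   The count (q - 2 + (-1)^n)/2 is stated multiplied by 2, in int. *)
Theorem theorem3p2 (F : finFieldType) (n : nat)
    (hodd : odd #|F|) (hn : (0 < n)%N)
    (hgcd : coprime n ((#|F| - 1) %/ 2)) :
  (#|[set a : F | perm_polyb ('X^n * ('X^((#|F| - 1) %/ 2) + a%:P))]|%:Z * 2
     = #|F|%:Z - 2 + (-1) ^+ n)%R.
Proof.
set m := ((#|F| - 1) %/ 2)%N in hgcd *.
have hq : (#|F| = (2 * m).+1)%N.
  have := finNzRing_gt1 F; move: hodd; rewrite /m; clear; set q := #|F|.
  move=> ho h1; have := odd_double_half q; rewrite ho -divn2 => e.
  lia.
have hm := m_pos hq.
have hev : forall a c : F, ('X^n * ('X^m + a%:P)).[c] = c ^+ n * (c ^+ m + a).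
  by move=> a c; rewrite !hornerE.
have eS : [set a : F | perm_polyb ('X^n * ('X^m + a%:P))] =
          [set a : F | (a ^+ 2 - 1) ^+ m == - (-1) ^+ n].
  apply/setP => a; rewrite !inE.
  apply/idP/idP => [/perm_polybP hi | /eqP E].
    apply/eqP; apply/(charPP a hq hn hgcd) => x y /= e; apply: hi; rewrite /= !hev //.
  apply/perm_polybP => x y /=; rewrite !hev; apply: (proj2 (charPP a hq hn hgcd) E).
rewrite eS hq.
have [cp cm] := countA hq.
clearbody m.
case ho: (odd n); rewrite -(@signr_odd F n) -(@signr_odd int n) ho.
  rewrite !expr1 opprK cp.
  move: hm; clear; lia.
rewrite !expr0 cm.
move: hm; clear; lia.
Qed.
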